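(* For an $E$-linear code $C$ of length $2n$, $C^{\perp_{S_R}}=C^{\perp_S}$ if and only if $C$ is right symplectic nice.
   Context: $E=\langle \kappa,\tau \mid 2\kappa=2\tau=0,\ \kappa^2=\kappa,\ \tau^2=\tau,\ \kappa\tau=\kappa,\ \tau\kappa=\tau\rangle$ is the non-unital ring $\{0,\kappa,\tau,\zeta\}$ ($|E|=4$), $\zeta=\kappa+\tau$, with $e\kappa=e\tau=e$, $e\zeta=0$ for all $e\in E$. An $E$-linear code of length $2n$ is a left $E$-submodule $C\subseteq E^{2n}$. Symplectic inner product: for $x=(u|v),y=(u'|v')\in E^{2n}$, $\langle x,y\rangle_s=\sum_i u_iv'_i+\sum_i v_iu'_i$. $C^{\perp_{S_L}}=\{z\in E^{2n}:\langle z,w\rangle_s=0\ \forall w\in C\}$, $C^{\perp_{S_R}}=\{z\in E^{2n}:\langle w,z\rangle_s=0\ \forall w\in C\}$, $C^{\perp_S}=C^{\perp_{S_L}}\cap C^{\perp_{S_R}}$. $C$ is right symplectic nice if $|C|\,|C^{\perp_{S_R}}|=|E|^{2n}$. *)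

(* Defs.v *)
From mathcomp Require Import all_boot.
Set Implicit Arguments. Unset Strict Implicit. Unset Printing Implicit Defensive.

(* The non-unital ring E = {0, kappa, tau, zeta}, encoded on bool * bool:
   0 = (false,false), kappa = (true,false), tau = (false,true),
   zeta = kappa + tau = (true,true).  Addition is componentwise xor
   (so 2x = 0), and multiplication is determined by the relations
   kappa^2 = kappa, tau^2 = tau, kappa tau = kappa, tau kappa = tau and
   distributivity: x * y = x if y \in {kappa, tau}, and 0 otherwise. *)
Definition E : finType := (bool * bool)%type.
Definition E0 : E := (false, false).
Definition Ek : E := (true, false).
Definition Et : E := (false, true).
Definition Ez : E := (true, true).

Definition addE (x y : E) : E := (x.1 (+) y.1, x.2 (+) y.2).
Definition mulE (x y : E) : E := if y.1 (+) y.2 then x else E0.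

Fact E_rel : [/\ mulE Ek Ek = Ek, mulE Et Et = Et, mulE Ek Et = Ek,
               mulE Et Ek = Et & addE Ek Et = Ez].
Proof. by []. Qed.

Definition word (n : nat) : finType := ({ffun 'I_n -> E} * {ffun 'I_n -> E})%type.

Definition word0 n : word n := ([ffun _ => E0], [ffun _ => E0]).
Definition addw n (x y : word n) : word n :=
  ([ffun i => addE (x.1 i) (y.1 i)], [ffun i => addE (x.2 i) (y.2 i)]).
Definition scalew n (e : E) (x : word n) : word n :=
  ([ffun i => mulE e (x.1 i)], [ffun i => mulE e (x.2 i)]).

Definition Elinear n (C : {set word n}) : Prop :=
  [/\ word0 n \in C,
      (forall x y, x \in C -> y \in C -> addw x y \in C) &
      (forall (e : E) x, x \in C -> scalew e x \in C)].

Definition symp n (x y : word n) : E :=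
  addE (\big[addE/E0]_(i < n) mulE (x.1 i) (y.2 i))
       (\big[addE/E0]_(i < n) mulE (x.2 i) (y.1 i)).

Definition perpSL n (C : {set word n}) : {set word n} :=
  [set z | [forall w in C, symp z w == E0]].
Definition perpSR n (C : {set word n}) : {set word n} :=
  [set z | [forall w in C, symp w z == E0]].
Definition perpS n (C : {set word n}) : {set word n} :=
  perpSL C :&: perpSR C.

Definition right_symplectic_nice n (C : {set word n}) : Prop :=
  #|C| * #|perpSR C| = #|E| ^ (2 * n).

(* Main.v *)
Require Import Defs.
From mathcomp Require Import all_boot all_algebra.
From mathcomp Require Import mxabelem.
Set Implicit Arguments. Unset Strict Implicit. Unset Printing Implicit Defensive.
Import GRing.Theory.
Local Open Scope ring_scope.

Lemma F2_cases (a : 'F_2) : a = 0 \/ a = 1.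
Proof. case: a => [[|[|k]] Hk]; [left|right|by []]; exact/val_inj. Qed.

Lemma cardF2 : #|'F_2| = 2%N.
Proof. by rewrite card_Fp. Qed.

Lemma key (m : nat) (S : 'M['F_2]_m) (B : {set 'rV['F_2]_m}) :
  S \in unitmx -> 0 \in B -> (forall x y, x \in B -> y \in B -> x + y \in B) ->
  (#|B| * #|[set y : 'rV['F_2]_m | [forall b in B, (b *m S *m y^T) ord0 ord0 == 0%R]]| = 2 ^ m)%N.
Proof.
move=> Su B0 BD.
set M := rowg_mx B.
have BM : B = rowg M.
  apply/eqP; rewrite eqEsubset sub_rowg_mx andTb.
  apply/subsetP=> v; rewrite inE genmxE => /submxP[u ->].
  rewrite mulmx_sum_row; apply: (big_ind (fun x => x \in B)) => // i _.
  rewrite rowK; have Bi := enum_valP i.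
  by case: (F2_cases (u 0 i)) => ->; rewrite ?scale0r ?scale1r.
have -> : [set y : 'rV['F_2]_m | [forall b in B, (b *m S *m y^T) ord0 ord0 == 0%R]] =
          rowg (kermx ((M *m S)^T)).
  apply/setP=> y; rewrite !inE sub_kermx; apply/forall_inP/idP.
  - move=> H; have H0 : M *m S *m y^T = 0.
      apply/matrixP=> i j; rewrite (ord1 j).
      have : row i M \in B by rewrite BM inE row_sub.
      move/H/eqP; rewrite -!row_mul => Hr; by rewrite [RHS]mxE -Hr !mxE.
    have -> : y *m (M *m S)^T = (M *m S *m y^T)^T by rewrite [RHS]trmx_mul trmxK.
    by rewrite H0 trmx0.
  - move=> /eqP H b; rewrite BM inE => /submxP[u ->].
    have H0 : M *m S *m y^T = 0.
      by rewrite -[LHS]trmxK trmx_mul trmxK H trmx0.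
    by rewrite -!mulmxA (mulmxA M) H0 mulmx0 mxE.
rewrite BM !card_rowg cardF2 mxrank_ker mxrank_tr mxrankMfree ?row_free_unit //.
by rewrite -expnD subnKC // rank_leq_col.
Qed.

Definition b2F (b : bool) : 'F_2 := b%:R.
Definition F2b (x : 'F_2) : bool := x != 0.
Definition phiE (e : E) : bool := e.1 (+) e.2.
Definition wat n (w : word n) (k : 'I_(n+n)) : E :=
  match split k with inl i => w.1 i | inr i => w.2 i end.
Definition rvE n (f : E -> bool) (w : word n) : 'rV['F_2]_(n+n) :=
  row_mx (\row_i b2F (f (w.1 i))) (\row_i b2F (f (w.2 i))).
Definition mk (a b : 'F_2) : E := (F2b a (+) F2b b, F2b b).
Definition mkw n (p q : 'rV['F_2]_(n+n)) : word n :=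
  ([ffun i => mk (p 0 (lshift n i)) (q 0 (lshift n i))],
   [ffun i => mk (p 0 (rshift n i)) (q 0 (rshift n i))]).
Definition Smx n : 'M['F_2]_(n+n) := block_mx 0 1%:M 1%:M 0.
Definition sig n (x y : 'rV['F_2]_(n+n)) : 'F_2 := (x *m Smx n *m y^T) 0 0.

Lemma b2F_xor a b : b2F (a (+) b) = b2F a + b2F b.
Proof. by case: a; case: b; rewrite /b2F /= ?addr0 ?add0r //; apply/val_inj. Qed.
Lemma b2F_and a b : b2F (a && b) = b2F a * b2F b.
Proof. by case: a; rewrite /b2F /= ?mul1r ?mul0r. Qed.
Lemma b2F_eq0 b : (b2F b == 0) = ~~ b.
Proof. by case: b. Qed.
Lemma F2bK a : b2F (F2b a) = a.
Proof. by case: (F2_cases a) => ->. Qed.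
Lemma b2FK b : F2b (b2F b) = b.
Proof. by case: b. Qed.
Lemma F2b0 : F2b 0 = false.
Proof. by []. Qed.

Lemma wat_add n (x y : word n) k : wat (addw x y) k = addE (wat x k) (wat y k).
Proof. by rewrite /wat; case: (split k) => i; rewrite ffunE. Qed.
Lemma wat_scale n e (x : word n) k : wat (scalew e x) k = mulE e (wat x k).
Proof. by rewrite /wat; case: (split k) => i; rewrite ffunE. Qed.
Lemma wat_mkw n (p q : 'rV['F_2]_(n+n)) k : wat (mkw p q) k = mk (p 0 k) (q 0 k).
Proof.
rewrite /wat; case: splitP => i Hi; rewrite ffunE /=;
  by congr (mk (p 0 _) (q 0 _)); apply/val_inj.
Qed.
Lemma wat0 n k : wat (word0 n) k = E0.
Proof. by rewrite /wat; case: (split k) => i; rewrite ffunE. Qed.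
Lemma word_eq n (x y : word n) : (forall k, wat x k = wat y k) -> x = y.
Proof.
move=> H; case: x y H => [x1 x2] [y1 y2] H; congr pair; apply/ffunP => i.
  by have := H (lshift n i); rewrite /wat (unsplitK (inl _ i)).
by have := H (rshift n i); rewrite /wat (unsplitK (inr _ i)).
Qed.
Lemma rvE_E n f (w : word n) k : rvE f w 0 k = b2F (f (wat w k)).
Proof. by rewrite /rvE /wat mxE; case: (split k) => i; rewrite mxE. Qed.

Lemma sig_rvE n f g (w z : word n) :
  sig (rvE f w) (rvE g z) =
  \sum_i b2F (f (w.1 i)) * b2F (g (z.2 i)) + \sum_i b2F (f (w.2 i)) * b2F (g (z.1 i)).
Proof.
rewrite /sig /rvE /Smx mul_row_block !mulmx0 !mulmx1 !add0r !addr0 tr_row_mx.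
rewrite mul_row_col mxE addrC !mxE; congr (_ + _); apply: eq_bigr => i _; rewrite !mxE //.
Qed.

Lemma symp_bit n (f : E -> bool) (w z : word n) :
  (forall x y, f (addE x y) = f x (+) f y) -> f E0 = false ->
  b2F (f (symp w z)) = sig (rvE f w) (rvE phiE z).
Proof.
move=> fD f0; rewrite sig_rvE /symp fD b2F_xor.
have hM : forall x y, b2F (f (mulE x y)) = b2F (f x) * b2F (phiE y).
  by move=> x y; rewrite /mulE -/(phiE y) -b2F_and; case: (phiE y); rewrite ?andbT ?andbF ?f0.
have hD : {morph (fun e => b2F (f e)) : x y / addE x y >-> x + y}.
  by move=> x y /=; rewrite fD b2F_xor.
have h0 : b2F (f E0) = 0 by rewrite f0.
rewrite !(big_morph _ hD h0); congr (_ + _); apply: eq_bigr => i _; exact: hM.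
Qed.

Lemma Smx_unit n : Smx n \in unitmx.
Proof.
have H : Smx n *m Smx n = 1%:M.
  rewrite /Smx mulmx_block !mul0mx !mulmx0 !mulmx1 !add0r !addr0 -scalar_mx_block //.
by case: (mulmx1_unit H).
Qed.

Lemma sigDl n (x y z : 'rV['F_2]_(n+n)) : sig (x + y) z = sig x z + sig y z.
Proof. by rewrite /sig !mulmxDl mxE. Qed.
Lemma sigr0 n (x : 'rV['F_2]_(n+n)) : sig x 0 = 0.
Proof. by rewrite /sig trmx0 mulmx0 mxE. Qed.
Lemma sig_nondeg n (y : 'rV['F_2]_(n+n)) : (forall q, sig q y = 0) -> y = 0.
Proof.
move=> H.
have H0 : Smx n *m y^T = 0.
  apply/matrixP => k j; rewrite (ord1 j) [RHS]mxE -(H (delta_mx 0 k)) /sig.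
  by rewrite -mulmxA -rowE [RHS]mxE.
by rewrite -[y]trmxK -(mulKmx (Smx_unit n) y^T) H0 mulmx0 trmx0.
Qed.

Notation phiv := (rvE phiE).

Lemma rv0E n k : (0 : 'rV['F_2]_(n+n)) 0 k = 0.
Proof. by rewrite mxE. Qed.

Lemma mkw0_snd n (x : word n) : mkw 0 (rvE snd x) = addw x (scalew Ek x).
Proof.
apply: word_eq => k; rewrite wat_mkw wat_add wat_scale rv0E rvE_E.
by case: (wat x k) => [[] []].
Qed.

Lemma mkw0_phi n (x : word n) : mkw 0 (phiv x) = scalew Ez x.
Proof.
apply: word_eq => k; rewrite wat_mkw wat_scale rv0E rvE_E.
by case: (wat x k) => [[] []].
Qed.

Lemma phiv_eq n (x z : word n) : phiv z = phiv x ->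
  z = addw (scalew Ek x) (mkw 0 (rvE snd z)).
Proof.
move=> H; apply: word_eq => k; rewrite wat_add wat_scale wat_mkw rv0E rvE_E.
have := congr1 (fun v : 'rV_(n+n) => v 0 k) H; rewrite /= !rvE_E => /(congr1 F2b).
rewrite !b2FK /phiE.
by case: (wat x k) => [[] []]; case: (wat z k) => [[] []].
Qed.

Lemma rvE_fst n (x : word n) : rvE fst x = phiv x + rvE snd x.
Proof.
apply/rowP => k; rewrite rvE_E mxE !rvE_E -b2F_xor /phiE.
by case: (wat x k) => [[] []].
Qed.

Lemma rvE_fst_mkw0 n (q : 'rV['F_2]_(n+n)) : rvE fst (mkw 0 q) = q.
Proof. by apply/rowP => k; rewrite rvE_E wat_mkw rv0E /mk /= F2bK. Qed.

Lemma phiv_mkw0 n (q : 'rV['F_2]_(n+n)) : phiv (mkw 0 q) = 0.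
Proof. by apply/rowP => k; rewrite rvE_E wat_mkw !rv0E /mk /phiE /=; case: (F2b _). Qed.

Lemma mkwK n (z : word n) : mkw (phiv z) (rvE snd z) = z.
Proof.
apply: word_eq => k; rewrite wat_mkw !rvE_E /mk !b2FK /phiE.
by case: (wat z k) => [[] []].
Qed.

Lemma phiv_mkw n (p q : 'rV['F_2]_(n+n)) : phiv (mkw p q) = p.
Proof.
apply/rowP => k; rewrite rvE_E wat_mkw /mk /phiE /=.
by rewrite -addbA addbb addbF F2bK.
Qed.

Lemma snd_mkw n (p q : 'rV['F_2]_(n+n)) : rvE snd (mkw p q) = q.
Proof. by apply/rowP => k; rewrite rvE_E wat_mkw /mk /= F2bK. Qed.

Lemma card_Phi n (P : pred ('rV['F_2]_(n+n) * 'rV['F_2]_(n+n))) :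
  #|[set z : word n | P (phiv z, rvE snd z)]| = #|[set p | P p]|.
Proof.
pose Phi := fun z : word n => (phiv z, rvE snd z).
have Pinj : injective Phi.
  by apply: (can_inj (g := fun p => mkw p.1 p.2)) => z; rewrite /Phi /= mkwK.
rewrite -(card_imset _ Pinj); apply: eq_card => p; rewrite [in RHS]inE.
apply/imsetP/idP => [[z]|Pp]; first by rewrite inE => Pz ->.
exists (mkw p.1 p.2); last by rewrite /Phi phiv_mkw snd_mkw; case: p {Pp}.
by rewrite inE phiv_mkw snd_mkw; case: p Pp.
Qed.

Definition Aset n (C : {set word n}) := [set phiv x | x in C].
Definition Bset n (C : {set word n}) := [set q : 'rV['F_2]_(n+n) | mkw 0 q \in C].
Definition Kset n (C : {set word n}) :=
  [set y : 'rV['F_2]_(n+n) | [forall b in Bset C, sig b y == 0]].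

Lemma phiv0 n : phiv (word0 n) = 0.
Proof. by apply/rowP => k; rewrite rvE_E wat0 mxE. Qed.

Lemma memC n (C : {set word n}) : Elinear C -> forall z,
  (z \in C) = (phiv z \in Aset C) && (rvE snd z \in Bset C).
Proof.
case=> C0 CD CS z; apply/idP/andP => [Cz|[/imsetP[x Cx Hx] Bz]].
  split; first exact: imset_f.
  by rewrite inE mkw0_snd; apply: CD => //; exact: CS.
rewrite (phiv_eq Hx); apply: CD; first exact: CS.
by rewrite inE in Bz.
Qed.

Lemma AsubB n (C : {set word n}) : Elinear C -> forall a, a \in Aset C -> a \in Bset C.
Proof. by case=> C0 CD CS a /imsetP[x Cx ->]; rewrite inE mkw0_phi; exact: CS. Qed.

Lemma fstD (x y : E) : (addE x y).1 = x.1 (+) y.1. Proof. by []. Qed.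
Lemma sndD (x y : E) : (addE x y).2 = x.2 (+) y.2. Proof. by []. Qed.

Lemma bits_zero (e : E) : b2F e.1 = 0 -> b2F e.2 = 0 -> e = E0.
Proof.
move=> /eqP h1 /eqP h2; rewrite b2F_eq0 in h1; rewrite b2F_eq0 in h2.
by case: e h1 h2 => [[] []].
Qed.

Lemma memR n (C : {set word n}) : Elinear C -> forall z,
  (z \in perpSR C) = (phiv z \in Kset C).
Proof.
move=> hC z; rewrite [_ \in perpSR C]inE [_ \in Kset C]inE.
apply/idP/idP => /forall_inP H; apply/forall_inP => b.
  rewrite inE => /H /eqP Hs.
  by rewrite -(rvE_fst_mkw0 b) -symp_bit // Hs.
move=> Cb; apply/eqP; apply: bits_zero.
  rewrite symp_bit // rvE_fst sigDl.
  have /eqP -> := H _ (AsubB hC (imset_f _ Cb)).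
  have /andP[_ Bb] : (phiv b \in Aset C) && (rvE snd b \in Bset C) by rewrite -memC.
  by have /eqP -> := H _ Bb; rewrite addr0.
rewrite symp_bit //.
have /andP[_ Bb] : (phiv b \in Aset C) && (rvE snd b \in Bset C) by rewrite -memC.
by have /eqP -> := H _ Bb.
Qed.

Lemma part1 n (C : {set word n}) : Elinear C ->
  (perpSR C = perpS C <-> (forall x, x \in C -> phiv x = 0)).
Proof.
move=> hC; split.
  move=> H x Cx; apply: sig_nondeg => q.
  have Rz : mkw 0 q \in perpSR C by rewrite memR // phiv_mkw0 inE; apply/forall_inP => b _; rewrite sigr0.
  move: Rz; rewrite H inE => /andP[Lz _].
  move: Lz; rewrite inE => /forall_inP /(_ x Cx) /eqP Hs.
  by rewrite -(rvE_fst_mkw0 q) -symp_bit // Hs.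
move=> P0; apply/setP => z; rewrite /perpS in_setI.
case Rz: (z \in perpSR C); rewrite ?andbF // andbT.
rewrite inE; symmetry; apply/forall_inP => w Cw; apply/eqP; apply: bits_zero.
  by rewrite symp_bit // P0 // sigr0.
by rewrite symp_bit // P0 // sigr0.
Qed.

Lemma F2_11 : (1 + 1 : 'F_2) = 0. Proof. exact/val_inj. Qed.

Lemma mk0D (a b : 'F_2) : mk 0 (a + b) = addE (mk 0 a) (mk 0 b).
Proof.
by case: (F2_cases a) => ->; case: (F2_cases b) => ->; rewrite ?addr0 ?add0r ?F2_11.
Qed.

Lemma part2 n (C : {set word n}) : Elinear C ->
  (right_symplectic_nice C <-> (forall x, x \in C -> phiv x = 0)).
Proof.
move=> hC; have [C0 CD CS] := hC.
have cardC : #|C| = (#|Aset C| * #|Bset C|)%N.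
  have -> : #|C| = #|[set z | (phiv z \in Aset C) && (rvE snd z \in Bset C)]|.
    by apply: eq_card => z; rewrite [in RHS]inE memC.
  rewrite (card_Phi (fun p => (p.1 \in Aset C) && (p.2 \in Bset C))) -cardsX.
  by apply: eq_card => p; rewrite !inE.
have cardR : #|perpSR C| = (#|Kset C| * 2 ^ (n + n))%N.
  have -> : #|perpSR C| = #|[set z | phiv z \in Kset C]|.
    by apply: eq_card => z; rewrite [in RHS]inE memR.
  rewrite (card_Phi (fun p => (p.1 \in Kset C))).
  have -> : (2 ^ (n + n))%N = #|[set: 'rV['F_2]_(n+n)]|.
    by rewrite cardsT card_mx cardF2 mul1n.
  rewrite -cardsX; by apply: eq_card => p; rewrite !inE andbT.
have keyB : (#|Bset C| * #|Kset C| = 2 ^ (n + n))%N.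
  apply: (@key (n + n) (Smx n) (Bset C) (Smx_unit n)).
    rewrite inE; have -> : mkw 0 0 = word0 n.
      by apply: word_eq => k; rewrite wat_mkw wat0 mxE.
    exact: C0.
  move=> x y; rewrite !inE => Bx By.
  have -> : mkw 0 (x + y) = addw (mkw 0 x) (mkw 0 y).
    by apply: word_eq => k; rewrite wat_add !wat_mkw !mxE mk0D.
  exact: CD.
have cardE : (#|E| ^ (2 * n) = 2 ^ (n + n) * 2 ^ (n + n))%N.
  rewrite -expnD card_prod card_bool -[(2 * 2)%N]/(2 ^ 2)%N -expnM.
  by rewrite !mul2n !addnn.
have A1 : right_symplectic_nice C <-> #|Aset C| = 1%N.
  rewrite /right_symplectic_nice cardC cardR cardE mulnA -(mulnA #|Aset C|) keyB -mulnA.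
  have pos : (0 < 2 ^ (n + n) * 2 ^ (n + n))%N by rewrite muln_gt0 expn_gt0.
  split => [H|->]; last by rewrite mul1n.
  by apply/eqP; rewrite -(eqn_pmul2r pos) mul1n H.
suff H : #|Aset C| = 1%N <-> (forall x, x \in C -> phiv x = 0).
  by split => [/A1/H|/H/A1].
split.
  move=> /eqP /cards1P [a Ha] x Cx.
  have h0 : (0 : 'rV_(n+n)) \in Aset C by rewrite -(phiv0 n); exact: imset_f.
  have hx : phiv x \in Aset C by exact: imset_f.
  by move: h0 hx; rewrite Ha !inE => /eqP <- /eqP ->.
move=> P0; have -> : Aset C = [set 0].
  apply/setP => v; rewrite inE; apply/imsetP/eqP => [[x Cx ->]|->]; first exact: P0.
  by exists (word0 n); rewrite ?phiv0.
by rewrite cards1.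
Qed.

Theorem mainTheorem11 (n : nat) (C : {set word n}) :
  Elinear C -> (perpSR C = perpS C <-> right_symplectic_nice C).
Proof.
move=> hC; have H1 := part1 hC; have H2 := part2 hC; tauto.
Qed.
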